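(* Let $I$ be a compact Hausdorff space and $f_i:\mathbb{R}^m\to\mathbb{R}$, $i\in I$, convex functions such that $i\mapsto f_i(x)$ is continuous on $I$ for each $x$; set $F(i,x):=f_i(x)$, $f(x):=\max_{i\in I}f_i(x)$, $I_f(x):=\{i\in I: f_i(x)=f(x)\}$. Let $\bar x\in\mathbb{R}^m$ with $f(\bar x)=0$. Then the following are equivalent: (i) $\min_{\|h\|=1}f'(\bar x,h)\neq0$; (ii) there exist constants $c,\varepsilon>0$ such that whenever $G\in C(I\times\mathbb{R}^m,\mathbb{R})$ is such that each $g_i:=G(i,\cdot)$ is convex, and, with $g(x):=\max_{i\in I}g_i(x)$ and $I_g(x):=\{i\in I:g_i(x)=g(x)\}$, one has: $g(\bar x)=0$; $I_g(\bar x)\subseteq I_f(\bar x)$ if $\min_{\|h\|=1}f'(\bar x,h)<0$; $I_f(\bar x)\subseteq I_g(\bar x)$ if $\min_{\|h\|=1}f'(\bar x,h)>0$; and $$\limsup_{x\to\bar x}\frac{|f_i(x)-g_i(x)-(f_i(\bar x)-g_i(\bar x))|}{\|x-\bar x\|}\le\varepsilon\quad\text{for all } i\in I_f(\bar x)\cap I_g(\bar x),$$ then $\tau_{\min}(G,\bar x)\le c$; (iii) there exist constants $c,\varepsilon>0$ such that for all $u^*\in\mathbb{R}^m$ with $\|u^*\|\le1$, one has $\tau_{\min}(G,\bar x)\le c$, where $G\in C(I\times\mathbb{R}^m,\mathbb{R})$ is defined by $G(i,x):=f_i(x)+\varepsilon\langle u^*,x-\bar x\rangle$.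
   Context: $\mathbb{R}^m$ carries the Euclidean norm, $B(\bar x,\delta)$ is the closed ball of radius $\delta$ around $\bar x$, $d(x,D)=\inf\{\|x-y\|:y\in D\}$ (with $\inf\emptyset=+\infty$). For a convex $\varphi$, $\varphi'(x,h):=\lim_{t\to0^+}\frac{\varphi(x+th)-\varphi(x)}{t}$. For $G\in C(I\times\mathbb{R}^m,\mathbb{R})$ with $g_i:=G(i,\cdot)$ convex and $g:=\max_{i\in I}g_i$, the solution set is $S_G:=\{x: g_i(x)\le0\ \forall i\in I\}$ and the local error bound modulus at $\bar x$ is $\tau_{\min}(G,\bar x):=\inf\{\tau>0:\exists\delta>0\text{ with } d(x,S_G)\le\tau[g(x)]_+\ \forall x\in B(\bar x,\delta)\}$, where $[t]_+=\max\{t,0\}$ and $\inf\emptyset=+\infty$. *)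

(* Defs.v *)
From HB Require Import structures.
From mathcomp Require Import all_boot all_order all_algebra.
From mathcomp Require Import all_classical all_reals all_analysis.
Set Implicit Arguments. Unset Strict Implicit. Unset Printing Implicit Defensive.
Import Order.TTheory GRing.Theory Num.Theory.
Import numFieldNormedType.Exports.
Local Open Scope classical_set_scope.
Local Open Scope ring_scope.

Section Defs.
Variables (R : realType) (m : nat).
Local Notation V := 'rV[R]_m.

Definition enorm (x : V) : R := Num.sqrt (\sum_(j < m) x ord0 j ^+ 2).
Definition inner (u x : V) : R := \sum_(j < m) u ord0 j * x ord0 j.

Definition convex_fun (phi : V -> R) : Prop :=
  forall (x y : V) (t : R), 0 <= t <= 1 ->
    phi (t *: x + (1 - t) *: y) <= t * phi x + (1 - t) * phi y.

Definition dir_deriv (phi : V -> R) (x h : V) : R :=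
  lim ((fun t : R => (phi (x + t *: h) - phi x) / t) @ 0^'+).

Definition min_dir_deriv (phi : V -> R) (x : V) : R :=
  inf [set dir_deriv phi x h | h in [set h : V | enorm h = 1]].

Variable I : Type.

Definition fmax (G : I -> V -> R) (x : V) : R := sup [set G i x | i in [set: I]].

Definition active (G : I -> V -> R) (x : V) : set I :=
  [set i | G i x = fmax G x].

Definition solset (G : I -> V -> R) : set V := [set x | forall i, G i x <= 0].

(* distance to a set, inf of empty set = +oo *)
Definition edist (x : V) (D : set V) : \bar R :=
  ereal_inf [set (enorm (x - y))%:E | y in D].

Definition tau_min (G : I -> V -> R) (xb : V) : \bar R :=
  ereal_inf [set tau%:E | tau in [set tau : R | 0 < tau /\
     exists delta : R, 0 < delta /\
       forall x : V, enorm (x - xb) <= delta ->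
         (edist x (solset G) <= (tau * Num.max (fmax G x) 0)%:E)%E]].

End Defs.

(* Main.v *)
Require Import Defs.
From HB Require Import structures.
From mathcomp Require Import all_boot all_order all_algebra.
From mathcomp Require Import all_classical all_reals all_analysis.
From mathcomp Require Import ring lra.
Import Order.TTheory GRing.Theory Num.Theory.
Import numFieldNormedType.Exports.
Local Open Scope classical_set_scope.
Local Open Scope ring_scope.
Set Implicit Arguments. Unset Strict Implicit. Unset Printing Implicit Defensive.

Section Enorm.
Variables (R : realType) (m : nat).
Local Notation V := 'rV[R]_m.
Implicit Types (x y u v : V).

Lemma sumsq_ge0 x : 0 <= \sum_(j < m) x ord0 j ^+ 2.
Proof. by apply: sumr_ge0 => j _; exact: sqr_ge0. Qed.

Lemma enorm_ge0 x : 0 <= enorm x.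
Proof. exact: sqrtr_ge0. Qed.

Lemma enorm_sq x : enorm x ^+ 2 = \sum_(j < m) x ord0 j ^+ 2.
Proof. by rewrite /enorm sqr_sqrtr // sumsq_ge0. Qed.

Lemma inner_self x : inner x x = enorm x ^+ 2.
Proof. by rewrite enorm_sq /inner; apply: eq_bigr => j _; rewrite expr2. Qed.

Lemma innerC u v : inner u v = inner v u.
Proof. by apply: eq_bigr => j _; rewrite mulrC. Qed.

Lemma innerD u x y : inner u (x + y) = inner u x + inner u y.
Proof. by rewrite /inner -big_split; apply: eq_bigr => j _; rewrite mxE mulrDr. Qed.

Lemma innerDl u x y : inner (x + y) u = inner x u + inner y u.
Proof. by rewrite innerC innerD !(innerC u). Qed.

Lemma innerZ u a x : inner u (a *: x) = a * inner u x.
Proof. by rewrite /inner mulr_sumr; apply: eq_bigr => j _; rewrite mxE mulrCA. Qed.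

Lemma innerN u x : inner u (- x) = - inner u x.
Proof. by rewrite -scaleN1r innerZ mulN1r. Qed.

Lemma innerB u x y : inner u (x - y) = inner u x - inner u y.
Proof. by rewrite innerD innerN. Qed.

Lemma inner0 u : inner u 0 = 0.
Proof. by rewrite /inner big1 // => j _; rewrite mxE mulr0. Qed.

Lemma CS_sq u v : inner u v ^+ 2 <= enorm u ^+ 2 * enorm v ^+ 2.
Proof.
rewrite !enorm_sq.
set A := \sum_j u ord0 j ^+ 2; set B := \sum_j v ord0 j ^+ 2; set C := inner u v.
have E : \sum_(j < m) (B * u ord0 j - C * v ord0 j) ^+ 2 = B * (A * B - C ^+ 2).
  have -> : \sum_(j < m) (B * u ord0 j - C * v ord0 j) ^+ 2 =
     \sum_(j < m) (B ^+ 2 * u ord0 j ^+ 2) - \sum_(j < m) (2 * B * C * (u ord0 j * v ord0 j))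
     + \sum_(j < m) (C ^+ 2 * v ord0 j ^+ 2).
    by rewrite -sumrB -big_split /=; apply: eq_bigr => j _; ring.
  rewrite -!mulr_sumr -/A -/B -/C; rewrite /C /inner; ring.
have B0 : 0 <= B by apply: sumr_ge0 => j _; exact: sqr_ge0.
have H : 0 <= B * (A * B - C ^+ 2) by rewrite -E; apply: sumr_ge0 => j _; exact: sqr_ge0.
have [Bz|Bp] := eqVneq B 0.
  have v0 : forall j, v ord0 j = 0.
    move=> j; apply/eqP; rewrite -sqrf_eq0; apply/eqP.
    by move/eqP: Bz; rewrite psumr_eq0 => [/allP /(_ j) /=|j' _]; [rewrite mem_index_enum => /(_ isT) /eqP|exact: sqr_ge0].
  have -> : C = 0 by rewrite /C /inner big1 // => j _; rewrite v0 mulr0.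
  by rewrite Bz expr0n /= mulr0.
have Bpos : 0 < B by rewrite lt_def Bp B0.
by rewrite -subr_ge0; move: H; rewrite pmulr_rge0.
Qed.

Lemma CS u v : `|inner u v| <= enorm u * enorm v.
Proof.
rewrite -(@ler_pXn2r _ 2) ?nnegrE ?mulr_ge0 ?enorm_ge0 //.
by rewrite real_normK ?num_real // exprMn CS_sq.
Qed.

Lemma enorm_triangle x y : enorm (x + y) <= enorm x + enorm y.
Proof.
rewrite -(@ler_pXn2r _ 2) ?nnegrE ?addr_ge0 ?enorm_ge0 //.
have -> : enorm (x + y) ^+ 2 = enorm x ^+ 2 + 2 * inner x y + enorm y ^+ 2.
  rewrite -!inner_self !innerD !innerDl [inner y x]innerC; ring.
have := CS x y; rewrite ler_norml => /andP[_ h].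
rewrite sqrrD; lra.
Qed.

Lemma enormZ a x : enorm (a *: x) = `|a| * enorm x.
Proof.
rewrite /enorm (eq_bigr (fun j => a ^+ 2 * x ord0 j ^+ 2)); last first.
  by move=> j _; rewrite mxE exprMn.
by rewrite -mulr_sumr sqrtrM ?sqr_ge0 // sqrtr_sqr.
Qed.

Lemma enormN x : enorm (- x) = enorm x.
Proof. by rewrite -scaleN1r enormZ normrN normr1 mul1r. Qed.

Lemma enorm0 : enorm (0 : V) = 0.
Proof. by rewrite -(scale0r (0 : V)) enormZ normr0 mul0r. Qed.

Lemma enorm_eq0 x : enorm x = 0 -> x = 0.
Proof.
move=> /eqP; rewrite -sqrf_eq0 enorm_sq psumr_eq0; last by move=> j _; exact: sqr_ge0.
move=> /allP H; apply/rowP => j; rewrite mxE.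
by apply/eqP; rewrite -sqrf_eq0; apply: (H j); rewrite mem_index_enum.
Qed.

Lemma coord_le_enorm x j : `|x ord0 j| <= enorm x.
Proof.
rewrite -(@ler_pXn2r _ 2) ?nnegrE ?enorm_ge0 // real_normK ?num_real //.
rewrite enorm_sq (bigD1 j) //= lerDl; apply: sumr_ge0 => k _; exact: sqr_ge0.
Qed.

Lemma enorm_le_l1 x : enorm x <= \sum_(j < m) `|x ord0 j|.
Proof.
rewrite -(@ler_pXn2r _ 2) ?nnegrE ?enorm_ge0 ?sumr_ge0 // enorm_sq.
suff : \sum_(j < m) x ord0 j ^+ 2 <= (\sum_(j < m) `|x ord0 j|) ^+ 2 /\ 0 <= \sum_(j < m) `|x ord0 j| by case.
elim/big_rec2: _ => [|j a b _ [h hb]]; first by rewrite expr0n.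
split; last by rewrite addr_ge0.
rewrite sqrrD -real_normK ?num_real //.
have := normr_ge0 (x ord0 j); nra.
Qed.

Lemma coord_le_mxnorm x j : `|x ord0 j| <= `|x|.
Proof.
have /mapP[k Hk ->] : `|x ord0 j| \in [seq `|x z.1 z.2| | z : 'I_1 * 'I_m].
  by apply/mapP; exists (ord0, j) => //=; rewrite mem_enum.
have -> : `|x| = mx_norm x by [].
by rewrite mx_normrE; apply/bigmax_geP; right => /=; exists k.
Qed.

Lemma l1_le_mxnorm x : \sum_(j < m) `|x ord0 j| <= m%:R * `|x|.
Proof.
apply: le_trans (ler_sum _ (fun j _ => coord_le_mxnorm x j)) _.
by rewrite sumr_const card_ord mulr_natl.
Qed.

Lemma enorm_le_mxnorm x : enorm x <= m%:R * `|x|.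
Proof. exact: le_trans (enorm_le_l1 x) (l1_le_mxnorm x). Qed.

End Enorm.

Section Conv.
Variables (R : realType) (m : nat).
Local Notation V := 'rV[R]_m.
Variable phi : V -> R.
Hypothesis cphi : convex_fun phi.

Lemma conv_ray x h s t : 0 < s -> s <= t ->
  phi (x + s *: h) <= (1 - s / t) * phi x + (s / t) * phi (x + t *: h).
Proof.
move=> s0 st; have t0 : 0 < t by exact: lt_le_trans st.
have l01 : 0 <= s / t <= 1.
  by apply/andP; split; [rewrite divr_ge0 // ltW | rewrite ler_pdivrMr // mul1r].
have := cphi (x + t *: h) x l01.
have -> : s / t *: (x + t *: h) + (1 - s / t) *: x = x + s *: h.
  apply/rowP => j; rewrite !mxE; field; exact: lt0r_neq0.
rewrite [X in _ <= X -> _]addrC; exact.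
Qed.

Definition dq x h t := (phi (x + t *: h) - phi x) / t.

Lemma dq_mono x h s t : 0 < s -> s <= t -> dq x h s <= dq x h t.
Proof.
move=> s0 st; have t0 : 0 < t by exact: lt_le_trans st.
have := conv_ray x h s0 st.
rewrite /dq ler_pdivrMr // => H.
rewrite mulrAC -mulrA; move: H; set u := s / t; nra.
Qed.

Lemma dq_lb x h t : 0 < t -> phi x - phi (x - h) <= dq x h t.
Proof.
move=> t0; rewrite /dq ler_pdivlMr //.
have tp : 0 < 1 + t by rewrite ltr_wpDr // ltW.
have l01 : 0 <= (1 + t)^-1 <= 1.
  apply/andP; split; first by rewrite invr_ge0 ltW.
  by rewrite invf_le1 // lerDl ltW.
have := cphi (x + t *: h) (x - h) l01.
have -> : (1 + t)^-1 *: (x + t *: h) + (1 - (1 + t)^-1) *: (x - h) = x.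
  apply/rowP => j; rewrite !mxE; field; rewrite lt0r_neq0 // ltr_wpDr // ltW.
have -> : 1 - (1 + t)^-1 = t * (1 + t)^-1.
  by field; rewrite lt0r_neq0 // ltr_wpDr // ltW.
move=> H.
have : phi x * (1 + t) <= phi (x + t *: h) + t * phi (x - h).
  rewrite -ler_pdivlMr //.
  apply: le_trans H _; rewrite le_eqVlt; apply/orP; left; apply/eqP; field.
  exact: lt0r_neq0.
lra.
Qed.

Let S x h := [set dq x h t | t in [set` `]0, +oo[%R]].

Lemma S_lb x h : has_lbound (S x h).
Proof.
exists (phi x - phi (x - h)) => _ [t /= t0 <-].
by apply: dq_lb; move: t0; rewrite in_itv /= andbT.
Qed.

Lemma dir_derivE x h : dir_deriv phi x h = inf (S x h).
Proof.
rewrite /dir_deriv; apply: cvg_lim => //.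
apply: (@nondecreasing_at_right_cvgr _ (dq x h) 0 (BInfty _ false)) => //.
- move=> s t; rewrite !in_itv /= !andbT => s0 t0 st; exact: dq_mono.
- exact: S_lb.
Qed.

Lemma dd_le x h t : 0 < t -> dir_deriv phi x h <= dq x h t.
Proof.
move=> t0; rewrite dir_derivE; apply: ge_inf; first exact: S_lb.
by exists t => //=; rewrite in_itv /= andbT.
Qed.

Lemma dd_lt x h a : dir_deriv phi x h < a -> exists2 t, 0 < t & dq x h t < a.
Proof.
rewrite dir_derivE => /inf_lt []; first by exists (dq x h 1), 1 => //=; rewrite in_itv /= andbT.
by move=> _ [t /= t0 <-] ?; exists t => //; move: t0; rewrite in_itv /= andbT.
Qed.

Lemma dd_ge x h : phi x - phi (x - h) <= dir_deriv phi x h.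
Proof.
rewrite dir_derivE; apply: lb_le_inf; first by exists (dq x h 1), 1 => //=; rewrite in_itv /= andbT.
by move=> _ [t /= t0 <-]; apply: dq_lb; move: t0; rewrite in_itv /= andbT.
Qed.

End Conv.

Section Cube.
Variables (R : realType) (m : nat).
Local Notation V := 'rV[R]_m.
Variable phi : V -> R.
Hypothesis cphi : convex_fun phi.

Lemma conv_le a b l B : 0 <= l <= 1 -> phi a <= B -> phi b <= B ->
  phi (l *: a + (1 - l) *: b) <= B.
Proof.
move=> /[dup] l01 /andP[l0 l1] ha hb; apply: le_trans (cphi a b l01) _.
have : l * phi a <= l * B by rewrite ler_wpM2l.
have : (1 - l) * phi b <= (1 - l) * B by rewrite ler_wpM2l // subr_ge0.
lra.
Qed.

Lemma line_bound x0 (E : V) r B tau : 0 < r -> phi x0 <= B ->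
  phi (x0 + r *: E) <= B -> phi (x0 - r *: E) <= B -> `|tau| <= r ->
  phi (x0 + tau *: E) <= B.
Proof.
move=> r0 h0 hp hm ht.
have l01 : 0 <= `|tau| / r <= 1.
  by apply/andP; split; [rewrite divr_ge0 // ltW | rewrite ler_pdivrMr // mul1r].
have [t0|t0] := leP 0 tau.
  have := conv_le l01 hp h0.
  have -> // : `|tau| / r *: (x0 + r *: E) + (1 - `|tau| / r) *: x0 = x0 + tau *: E.
  apply/rowP => j; rewrite !mxE ger0_norm //; field; exact: lt0r_neq0.
have := conv_le l01 hm h0.
have -> // : `|tau| / r *: (x0 - r *: E) + (1 - `|tau| / r) *: x0 = x0 + tau *: E.
apply/rowP => j; rewrite !mxE ltr0_norm //; field; exact: lt0r_neq0.
Qed.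

Definition ee (k : 'I_m) : V := delta_mx ord0 k.

Lemma seq_bound x0 r B : 0 < r -> phi x0 <= B ->
  (forall k, phi (x0 + r *: ee k) <= B) -> (forall k, phi (x0 - r *: ee k) <= B) ->
  forall (s : seq 'I_m) (c : 'I_m -> R), \sum_(k <- s) `|c k| <= r ->
  phi (x0 + \sum_(k <- s) c k *: ee k) <= B.
Proof.
move=> r0 h0 hp hm; elim => [|a s IH] c hs.
  by rewrite big_nil addr0.
rewrite big_cons in hs; rewrite big_cons.
set W := \sum_(k <- s) c k *: ee k; set b := \sum_(k <- s) `|c k|.
have b0 : 0 <= b by apply: sumr_ge0 => k _.
have {}hs : `|c a| + b <= r := hs.
have [ca0|ca0] := eqVneq (c a) 0.
  by rewrite ca0 scale0r add0r; apply: IH; move: hs; rewrite ca0 normr0 add0r.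
have [bz|bpos] := eqVneq b 0.
  have W0 : W = 0.
    move/eqP: bz; rewrite /b psumr_eq0 // => /allP H.
    rewrite /W big_seq big1 // => k ks; have := H k ks; rewrite normr_eq0 => /eqP ->.
    by rewrite scale0r.
  by rewrite W0 addr0; apply: (line_bound r0 h0 (hp a) (hm a)); move: hs; rewrite bz addr0.
have bp : 0 < b by rewrite lt_def bpos b0.
have cap : 0 < `|c a| by rewrite normr_gt0.
set S := `|c a| + b.
have Sp : 0 < S by rewrite ltr_wpDr // ltW.
set l := `|c a| / S.
have l01 : 0 <= l <= 1.
  by apply/andP; split; [rewrite divr_ge0 // ltW | rewrite ler_pdivrMr // mul1r lerDl].
have h2 : phi (x0 + (S / `|c a| * c a) *: ee a) <= B.
  apply: (line_bound r0 h0 (hp a) (hm a)); rewrite normrM ger0_norm; last by rewrite divr_ge0 // ltW.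
  by rewrite -mulrA mulVf ?mulr1 // lt0r_neq0.
have h1 : phi (x0 + (S / b) *: W) <= B.
  rewrite /W scaler_sumr.
  have -> : \sum_(i <- s) S / b *: (c i *: ee i) = \sum_(i <- s) (S / b * c i) *: ee i.
    by apply: eq_bigr => i _; rewrite scalerA.
  apply: IH; rewrite (eq_bigr (fun i => S / b * `|c i|)); last first.
    by move=> i _; rewrite normrM ger0_norm // divr_ge0 // ltW.
  by rewrite -mulr_sumr -/b mulrAC -mulrA mulfV ?mulr1 // lt0r_neq0.
have := conv_le l01 h2 h1.
have -> // : l *: (x0 + (S / `|c a| * c a) *: ee a) + (1 - l) *: (x0 + S / b *: W)
   = x0 + (c a *: ee a + W).
apply/rowP => j; rewrite !mxE /l /S.
field; rewrite ?lt0r_neq0 //.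
Qed.

Lemma l1_ball_bound x0 r B : 0 < r -> phi x0 <= B ->
  (forall k, phi (x0 + r *: ee k) <= B) -> (forall k, phi (x0 - r *: ee k) <= B) ->
  forall w : V, \sum_(k < m) `|w ord0 k| <= r -> phi (x0 + w) <= B.
Proof.
move=> r0 h0 hp hm w hw; rewrite [w]row_sum_delta.
have := seq_bound r0 h0 hp hm hw.
by rewrite /ee.

Qed.

End Cube.
Arguments ee {R m} k.

Section Fam.
Variables (R : realType) (m : nat) (I : topologicalType).
Local Notation V := 'rV[R]_m.
Hypothesis cptI : compact [set: I].
Hypothesis neI : [set: I] !=set0.

Lemma fam_bounded (g : I -> R) : continuous g -> exists K, forall i, `|g i| <= K.
Proof.
move=> cg.
have cpt : compact (g @` [set: I]).
  by apply: continuous_compact => //; apply: continuous_subspaceT.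
have [M [_ HM]] := compact_bounded cpt.
exists (M + 1) => i; apply: (HM (M + 1)); first by rewrite ltrDl.
by exists i.
Qed.

Variable G : I -> V -> R.
Hypothesis cG : forall x, continuous (fun i => G i x).

Lemma fmax_has_sup x : has_sup [set G i x | i in [set: I]].
Proof.
have [i _] := neI; split; first by exists (G i x), i.
have [K HK] := fam_bounded (@cG x).
by exists K => _ [j _ <-]; apply: le_trans (HK j); exact: ler_norm.
Qed.

Lemma fmax_ub i x : G i x <= fmax G x.
Proof. by apply: (sup_upper_bound (fmax_has_sup x)); exists i. Qed.

Lemma fmax_le x B : (forall i, G i x <= B) -> fmax G x <= B.
Proof.
move=> H; apply: ge_sup; first by have [i _] := neI; exists (G i x), i.
by move=> _ [j _ <-]; exact: H.
Qed.

Lemma fmax_convex : (forall i, convex_fun (G i)) -> convex_fun (fmax G).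
Proof.
move=> cv x y t t01; apply: fmax_le => i; apply: le_trans (cv i x y t t01) _.
move: t01 => /andP[t0 t1].
by apply: lerD; apply: ler_wpM2l; rewrite ?subr_ge0 //; exact: fmax_ub.
Qed.

End Fam.

Lemma joint_to_sep (R : realType) (m : nat) (I : topologicalType) (G : I -> 'rV[R]_m -> R) :
  continuous (fun p : I * 'rV[R]_m => G p.1 p.2) -> forall x, continuous (fun i => G i x).
Proof.
move=> hG x i.
have h1 : (fun j : I => (j, x)) @ i --> (i, x).
  move=> A [[A1 A2] /= [hA1 hA2] sA]; apply: filterS hA1 => j hj.
  by apply: sA; split => //=; exact: nbhs_singleton.
exact: (cvg_comp _ _ h1 (hG (i, x))).
Qed.

Section Joint.
Variables (R : realType) (m : nat) (I : topologicalType).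
Local Notation V := 'rV[R]_m.
Hypothesis m0 : (0 < m)%N.
Hypothesis cptI : compact [set: I].
Hypothesis neI : [set: I] !=set0.
Variable F : I -> V -> R.
Hypothesis cvxF : forall i, convex_fun (F i).
Hypothesis cF : forall x, continuous (fun i => F i x).

Lemma unif_bound : exists Kf : V -> R, forall p j, `|F j p| <= Kf p.
Proof.
have H : forall p, exists K, forall j, `|F j p| <= K.
  by move=> p; exact: (fam_bounded cptI (@cF p)).
have [Kf HK] := choice H; by exists Kf.
Qed.

Lemma Kf_ge0 (Kf : V -> R) : (forall p j, `|F j p| <= Kf p) -> forall p, 0 <= Kf p.
Proof. by move=> HK p; have [j _] := neI; exact: le_trans (HK p j). Qed.

Lemma equi_lip x0 : exists L, 0 <= L /\ forall j x, `|x - x0| <= 1 ->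
  `|F j x - F j x0| <= L * `|x - x0|.
Proof.
have [Kf HK] := unif_bound; have K0 := Kf_ge0 HK.
set r : R := m%:R.
have r0 : 0 < r by rewrite ltr0n.
set B := Kf x0 + \sum_(k < m) (Kf (x0 + r *: ee k) + Kf (x0 - r *: ee k)).
have sum0 : 0 <= \sum_(k < m) (Kf (x0 + r *: ee k) + Kf (x0 - r *: ee k)).
  by apply: sumr_ge0 => k _; rewrite addr_ge0.
have Bp : forall j p, p = x0 \/ (exists k, p = x0 + r *: ee k) \/ (exists k, p = x0 - r *: ee k) ->
    F j p <= B.
  move=> j p hp; apply: le_trans (ler_norm _) _; apply: le_trans (HK p j) _.
  have sk : forall k, Kf (x0 + r *: ee k) + Kf (x0 - r *: ee k) <=
      \sum_(k < m) (Kf (x0 + r *: ee k) + Kf (x0 - r *: ee k)).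
    move=> k; rewrite (bigD1 k) //= lerDl; apply: sumr_ge0 => i _; exact: addr_ge0.
  have := K0 x0; rewrite /B.
  case: hp => [->|[[k ->]|[k ->]]]; first by lra.
    by have := sk k; have := K0 (x0 - r *: ee k); lra.
  by have := sk k; have := K0 (x0 + r *: ee k); lra.
have ball_b : forall j w, `|w| <= 1 -> F j (x0 + w) <= B.
  move=> j w hw; apply: (l1_ball_bound (cvxF j) r0).
  - by apply: Bp; left.
  - by move=> k; apply: Bp; right; left; exists k.
  - by move=> k; apply: Bp; right; right; exists k.
  - apply: le_trans (l1_le_mxnorm w) _; rewrite /r -[X in _ <= X]mulr1.
    by rewrite ler_wpM2l.
exists (B + Kf x0); split.
  by rewrite addr_ge0 // addr_ge0.
move=> j x hx.
have [xe|xne] := eqVneq x x0.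
  by rewrite xe !subrr !normr0 mulr0.
set t := `|x - x0|.
have t0 : 0 < t by rewrite normr_gt0 subr_eq0.
set w := t^-1 *: (x - x0).
have nw : `|w| = 1 by rewrite /w normrZ normfV normr_id mulVf // lt0r_neq0.
have xw : x = x0 + t *: w by rewrite /w scalerA mulfV ?lt0r_neq0 // scale1r addrC subrK.
have k0 : `|F j x0| <= Kf x0 := HK x0 j.
have up : forall v, `|v| <= 1 -> F j (x0 + t *: v) - F j x0 <= t * (B + Kf x0).
  move=> v hv.
  have := conv_ray (cvxF j) x0 v t0 hx; rewrite divr1 scale1r => h.
  have h2 := ball_b j v hv.
  move: k0; rewrite ler_norml => /andP[k0 _].
  have : t * F j (x0 + v) <= t * B by rewrite ler_wpM2l // ltW.
  nra.
have hu := up w (ltac:(by rewrite nw)).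
have hl := up (- w) (ltac:(by rewrite normrN nw)).
have mid : F j x0 <= 2^-1 * F j x + 2^-1 * F j (x0 + t *: - w).
  have h01 : 0 <= (2 : R)^-1 <= 1 by apply/andP; split; [rewrite invr_ge0|rewrite invf_le1 // ler1n].
  have := cvxF j x (x0 + t *: - w) h01.
  have -> : 2^-1 *: x + (1 - 2^-1) *: (x0 + t *: - w) = x0.
    rewrite xw; apply/rowP => i; rewrite !mxE; field; exact: lt0r_neq0.
  have -> : (1 - 2^-1 : R) = 2^-1 by field.
  done.
rewrite ler_norml; apply/andP; split; last by rewrite xw mulrC.
rewrite xw in mid *; rewrite mulrC; lra.
Qed.

Lemma joint_cont : continuous (fun p : I * V => F p.1 p.2).
Proof.
move=> [i0 x0]; apply/cvgrPdist_lt => e e0.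
have [L [L0 HL]] := equi_lip x0.
set d := Num.min 1 (e / 2 / (L + 1)).
have L1 : 0 < L + 1 by rewrite ltr_wpDl.
have d0 : 0 < d by rewrite lt_min ltr01 /= divr_gt0 // divr_gt0.
have hi : \forall j \near i0, `|F i0 x0 - F j x0| < e / 2.
  by move/cvgrPdist_lt : (@cF x0 i0); apply; rewrite divr_gt0.
have hx : \forall x \near x0, `|x0 - x| < d.
  by move/cvgrPdist_lt : (@cvg_id _ (nbhs x0)); apply.
exists ([set j | `|F i0 x0 - F j x0| < e / 2], [set x | `|x0 - x| < d]) => //=.
move=> [j x] /= [hj hxx].
have dx1 : `|x - x0| <= 1 by rewrite distrC; apply: le_trans (ltW hxx) _; rewrite ge_min lexx.
have := HL j x dx1.
have hd : L * `|x - x0| <= e / 2.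
  apply: le_trans (_ : L * d <= _).
    by rewrite ler_wpM2l // distrC ltW.
  apply: le_trans (_ : (L + 1) * (e / 2 / (L + 1)) <= _).
    apply: ler_pM => //; [exact: ltW | by rewrite lerDl | by rewrite ge_min lexx orbT].
  by rewrite mulrC divfK // lt0r_neq0.
have := ler_distD (F j x0) (F i0 x0) (F j x).
rewrite [`|F j x - F j x0|]distrC.
lra.
Qed.

End Joint.

Section Unif.
Variables (R : realType) (I : topologicalType).
Hypothesis cptI : compact [set: I].
Variable phi : I -> R -> R.
Variable kappa : R.
Hypothesis cphi : forall s, continuous (fun j => phi j s).
Hypothesis rayphi : forall j s t, 0 < s -> s <= t -> phi j s <= (s / t) * phi j t.

Lemma unif_step : (forall i, exists2 s, 0 < s & phi i s < kappa * s) ->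
  exists2 s, 0 < s & forall j, phi j s <= kappa * s.
Proof.
move=> H.
have Hcov : \forall s \near (0 : R)^'+, [set: I] `<=` (fun j => phi j s < kappa * s).
  apply: (proj1 (compact_near_coveringP [set: I]) cptI R (0^'+)
     (fun s j => phi j s < kappa * s)) => i _.
  have [si si0 hsi] := H i.
  have e0 : 0 < kappa * si - phi i si by rewrite subr_gt0.
  have hn : \forall j \near i, `|phi i si - phi j si| < kappa * si - phi i si.
    by move/cvgrPdist_lt : (@cphi si i); apply.
  have hr : \forall s \near 0^'+, 0 < s < si.
    near=> s; apply/andP; split; near: s; [exact: nbhs_right_gt | exact: nbhs_right_lt].
  exists ([set j | `|phi i si - phi j si| < kappa * si - phi i si], [set s | 0 < s < si]) => //=.
  move=> [j s] /= [hj /andP[s0 ssi]].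
  have hjs : phi j si < kappa * si.
    move: hj; rewrite ltr_norml => /andP[h1 _]; lra.
  apply: le_lt_trans (rayphi j s0 (ltW ssi)) _.
  have -> : kappa * s = (s / si) * (kappa * si).
    by field; rewrite lt0r_neq0.
  by rewrite ltr_pM2l // divr_gt0.
near (0 : R)^'+ => s.
exists s; first by near: s; exact: nbhs_right_gt.
move=> j; apply: ltW; exact: (near Hcov s).
Unshelve. all: by end_near.
Qed.

End Unif.

Section Misc.
Variables (R : realType) (m : nat).
Local Notation V := 'rV[R]_m.

Lemma limsup_near (f : V -> R) (F : set_system V) (FF : Filter F) a b :
  (limf_esup (fun x => (f x)%:E) F <= a%:E)%E -> a < b -> \forall x \near F, f x < b.
Proof.
move=> ha ab.
have : (limf_esup (fun x => (f x)%:E) F < b%:E)%E by apply: le_lt_trans ha _; rewrite lte_fin.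
rewrite limf_esupE => /ereal_inf_lt [_ [A FA <-]] hA.
apply: filterS FA => x Ax.
have : ((f x)%:E <= ereal_sup ((fun x => (f x)%:E) @` A))%E by apply: ereal_sup_ubound; exists x.
by move=> /le_lt_trans /(_ hA); rewrite lte_fin.
Qed.

Lemma ray_near (xb h : V) (A : V -> Prop) : h != 0 ->
  (\forall x \near xb^', A x) -> \forall s \near (0 : R)^'+, A (xb + s *: h).
Proof.
move=> h0; rewrite near_withinE => /nbhs_normP [e /= e0 He].
have hp : 0 < `|h| by rewrite normr_gt0.
near=> s.
have s0 : 0 < s by near: s; exact: nbhs_right_gt.
have se : s < e / `|h| by near: s; apply: nbhs_right_lt; rewrite divr_gt0.
apply: He => /=.
  rewrite opprD addrA subrr add0r normrN normrZ gtr0_norm //.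
  by rewrite -ltr_pdivlMr.
apply/negP => /eqP H.
have : s *: h == 0 by apply/eqP; apply: (@addrI _ xb); rewrite addr0.
by rewrite scaler_eq0 (negbTE h0) orbF => /eqP s00; move: s0; rewrite s00 ltxx.
Unshelve. all: by end_near.
Qed.

Lemma small_s (a b k : R) : a < 0 -> exists2 s, 0 < s <= 1 & (1 - s) * a + s * b < k * s.
Proof.
move=> a0.
set D := `|b - a - k| + 1.
have D0 : 0 < D by rewrite ltr_wpDl.
have aD : 0 < - a + D by rewrite addr_gt0 // oppr_gt0.
exists (- a / (- a + D)).
  apply/andP; split; first by rewrite divr_gt0 // oppr_gt0.
  by rewrite ler_pdivrMr // mul1r lerDl ltW.
set s := - a / (- a + D).
have s0 : 0 < s by rewrite divr_gt0 // oppr_gt0.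
have sD : s * D < - a.
  rewrite /s mulrAC ltr_pdivrMr //.
  have : 0 < - a * - a by rewrite mulr_gt0 // oppr_gt0.
  move: D0; rewrite /D; nra.
have : s * (b - a - k) <= s * `|b - a - k| by apply: ler_wpM2l; [exact: ltW | exact: ler_norm].
have : s * `|b - a - k| <= s * D by apply: ler_wpM2l; [exact: ltW | rewrite /D lerDl].
nra.
Qed.

Lemma enorm_ee (k : 'I_m) : enorm (ee k : V) = 1.
Proof.
rewrite /enorm (bigD1 k) //= big1 ?addr0.
  by rewrite /ee mxE !eqxx /= expr1n sqrtr1.
by move=> j jk; rewrite /ee mxE eqxx (negbTE jk) /= expr0n.
Qed.

Lemma normalize (v : V) : v != 0 ->
  enorm ((enorm v)^-1 *: v) = 1 /\ v = enorm v *: ((enorm v)^-1 *: v) /\ 0 < enorm v.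
Proof.
move=> v0.
have e0 : 0 < enorm v.
  rewrite lt_def enorm_ge0 andbT; apply/eqP => /enorm_eq0 h; by rewrite h eqxx in v0.
split; first by rewrite enormZ normfV ger0_norm ?enorm_ge0 // mulVf // lt0r_neq0.
by rewrite scalerA mulfV ?scale1r // lt0r_neq0.
Qed.

Lemma enorm_unit_neq0 (h : V) : enorm h = 1 -> h != 0.
Proof. by move=> h1; apply/eqP => h0; move: h1; rewrite h0 enorm0 => /eqP; rewrite eq_sym oner_eq0. Qed.

Lemma edist_le (x y : V) (D : set V) : D y -> (Defs.edist x D <= (enorm (x - y))%:E)%E.
Proof. by move=> Dy; apply: ereal_inf_lbound; exists y. Qed.

End Misc.

Section Main.
Variables (R : realType) (m : nat) (I : topologicalType).
Local Notation V := 'rV[R]_m.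
Variables (F : I -> V -> R) (xb : V).
Hypothesis m0 : (0 < m)%N.
Hypothesis cptI : compact [set: I].
Hypothesis neI : [set: I] !=set0.
Hypothesis cvxF : forall i, convex_fun (F i).
Hypothesis cF : forall x, continuous (fun i => F i x).
Hypothesis fxb : fmax F xb = 0.

Local Notation f := (fmax F).

Lemma cvxf : convex_fun f.
Proof. exact: (fmax_convex cptI neI cF cvxF). Qed.

Lemma Dset_ne : [set dir_deriv f xb h | h in [set h : V | enorm h = 1]] !=set0.
Proof.
by exists (dir_deriv f xb (ee (Ordinal m0))), (ee (Ordinal m0)) => //=; rewrite enorm_ee.
Qed.

Lemma Fxb_le i : F i xb <= 0.
Proof. by rewrite -fxb; exact: (fmax_ub cptI neI cF). Qed.

Lemma tau_le (G : I -> V -> R) c delta : 0 < c -> 0 < delta ->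
  (forall x, enorm (x - xb) <= delta ->
     (Defs.edist x (solset G) <= (c * Num.max (fmax G x) 0)%:E)%E) ->
  (tau_min G xb <= c%:E)%E.
Proof.
move=> c0 d0 H; apply: ereal_inf_lbound; exists c => //; split => //.
by exists delta.
Qed.

Lemma neg_case : min_dir_deriv f xb < 0 ->
  exists c eps : R, 0 < c /\ 0 < eps /\
         forall G : I -> V -> R,
           continuous (fun p : I * V => G p.1 p.2) ->
           (forall i, convex_fun (G i)) ->
           fmax G xb = 0 ->
           (min_dir_deriv f xb < 0 -> active G xb `<=` active F xb) ->
           (0 < min_dir_deriv f xb -> active F xb `<=` active G xb) ->
           (forall i, active F xb i -> active G xb i ->
              (limf_esup (fun x : V =>
                  (`|F i x - G i x - (F i xb - G i xb)| / enorm (x - xb))%:E)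
                 xb^' <= eps%:E)%E) ->
           (tau_min G xb <= c%:E)%E.
Proof.
move=> mneg.
have [_ [h hh <-] hp] := inf_lt Dset_ne mneg.
set p := dir_deriv f xb h in hp.
have h0 : h != 0 := enorm_unit_neq0 hh.
set g := - p / 2.
have g0 : 0 < g by rewrite /g divr_gt0 // oppr_gt0.
have [s0 s00 hs0] := dd_lt cvxf (a := p / 2) (ltac:(lra) : p < p / 2).
move: hs0; rewrite /dq fxb subr0 ltr_pdivrMr // => hs0.
have hF : forall i s, 0 < s -> s <= s0 -> F i (xb + s *: h) <= - g * s.
  move=> i s s0p ss0.
  have := conv_ray (cvxF i) xb h s0p ss0.
  have := Fxb_le i.
  have : F i (xb + s0 *: h) <= f (xb + s0 *: h) by exact: (fmax_ub cptI neI cF).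
  have l0 : 0 <= s / s0 by rewrite divr_ge0 // ltW.
  have l1 : s / s0 <= 1 by rewrite ler_pdivrMr // mul1r.
  have ls : s / s0 * s0 = s by rewrite divfK // lt0r_neq0.
  move: hs0; rewrite /g => hs0.
  nra.
exists (8 / g), (g / 4); split; first by rewrite divr_gt0.
split; first by rewrite divr_gt0.
move=> G hGc hGcvx hG0 hneg _ hls.
have cG := joint_to_sep hGc.
have Gxb_le : forall j, G j xb <= 0.
  by move=> j; rewrite -hG0; exact: (fmax_ub cptI neI cG).
have step : forall i, exists2 s, 0 < s & G i (xb + s *: h) < (- g / 4) * s.
  move=> i.
  have [aG|naG] := pselect (active G xb i).
    have aF := hneg mneg i aG.
    have Fi0 : F i xb = 0 by rewrite aF.
    have Gi0 : G i xb = 0 by rewrite aG.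
    have Hn := limsup_near _ (hls i aF aG) (ltac:(lra) : g / 4 < g / 2).
    have Hr := ray_near h0 Hn.
    near (0 : R)^'+ => s.
    have sp : 0 < s by near: s; exact: nbhs_right_gt.
    have ss0 : s < s0 by near: s; exact: nbhs_right_lt.
    have H1 : `|F i (xb + s *: h) - G i (xb + s *: h) - (F i xb - G i xb)| / enorm ((xb + s *: h) - xb) < g / 2.
      exact: (near Hr s).
    move: H1; have -> : xb + s *: h - xb = s *: h by rewrite addrAC subrr add0r.
    rewrite Fi0 Gi0 subrr subr0 enormZ (gtr0_norm sp) hh mulr1.
    rewrite ltr_pdivrMr // ltr_norml => /andP[h1 h2].
    have := hF i s sp (ltW ss0).
    exists s => //; nra.
  have Gneg : G i xb < 0.
    rewrite lt_neqAle Gxb_le andbT; apply/negP => /eqP e; apply: naG.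
    by rewrite /active /= e hG0.
  have [s /andP[sp s1] hs] := small_s (G i (xb + h)) (- g / 4) Gneg.
  exists s => //.
  have := conv_ray (hGcvx i) xb h sp s1; rewrite divr1 scale1r.
  move=> H; exact: le_lt_trans H hs.
have ray : forall j s t, 0 < s -> s <= t -> G j (xb + s *: h) <= s / t * G j (xb + t *: h).
  move=> j s t sp st; have tp : 0 < t by exact: lt_le_trans st.
  have := conv_ray (hGcvx j) xb h sp st.
  have := Gxb_le j.
  have l1 : s / t <= 1 by rewrite ler_pdivrMr // mul1r.
  nra.
have [ss ss0 hss] := unif_step cptI (phi := fun j s => G j (xb + s *: h))
   (kappa := - g / 4) (fun s => cG (xb + s *: h)) ray step.
apply: (tau_le (delta := ss)) => //; first by rewrite divr_gt0.
move=> x hx.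
have [gle|ggt] := leP (fmax G x) 0.
  have Sx : solset G x by move=> j; apply: le_trans gle; exact: (fmax_ub cptI neI cG).
  apply: le_trans (edist_le x Sx) _; rewrite subrr enorm0 lee_fin.
  by rewrite mulr0.
set gx := fmax G x.
set y := xb + ss *: h.
set q := g * ss / 4.
have q0 : 0 < q by rewrite /q divr_gt0 // mulr_gt0.
have gq : 0 < gx + q by rewrite addr_gt0.
set t := q / (gx + q).
have t01 : 0 <= t <= 1.
  apply/andP; split; first by rewrite divr_ge0 // ltW.
  by rewrite ler_pdivrMr // mul1r lerDr ltW.
set z := t *: x + (1 - t) *: y.
have Sz : solset G z.
  move=> j; apply: le_trans (hGcvx j x y t t01) _.
  have hx1 : G j x <= gx by exact: (fmax_ub cptI neI cG).
  have hy1 : G j y <= - q by rewrite /y /q; move: (hss j) => /= H; apply: le_trans H _; lra.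
  move: t01 => /andP[t0 t1].
  have e : t * gx - (1 - t) * q = 0 by rewrite /t; field; rewrite lt0r_neq0.
  nra.
apply: le_trans (edist_le x Sz) _; rewrite lee_fin.
have -> : x - z = (1 - t) *: (x - y).
  by rewrite /z; apply/rowP => k; rewrite !mxE; ring.
rewrite enormZ ger0_norm; last by move: t01 => /andP[_ t1]; rewrite subr_ge0.
have exy : enorm (x - y) <= 2 * ss.
  have -> : x - y = (x - xb) + - (ss *: h) by rewrite /y opprD addrA.
  apply: le_trans (enorm_triangle _ _) _.
  rewrite enormN enormZ gtr0_norm // hh mulr1; lra.
have e1 : (1 - t) * (gx + q) = gx by rewrite /t; field; rewrite lt0r_neq0.
have t1 : 0 <= 1 - t by rewrite subr_ge0; case/andP: t01.
have tq : (1 - t) * q <= gx.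
  have : 0 <= (1 - t) * gx by apply: mulr_ge0 => //; exact: ltW.
  nra.
apply: le_trans (_ : (1 - t) * (2 * ss) <= _); first by rewrite ler_wpM2l.
have -> : (1 - t) * (2 * ss) = 8 / g * ((1 - t) * q).
  by rewrite /q; field; rewrite lt0r_neq0.
by rewrite ler_wpM2l // divr_ge0 // ltW.
Unshelve. all: by end_near.
Qed.

Lemma pos_case : 0 < min_dir_deriv f xb ->
  exists c eps : R, 0 < c /\ 0 < eps /\
         forall G : I -> V -> R,
           continuous (fun p : I * V => G p.1 p.2) ->
           (forall i, convex_fun (G i)) ->
           fmax G xb = 0 ->
           (min_dir_deriv f xb < 0 -> active G xb `<=` active F xb) ->
           (0 < min_dir_deriv f xb -> active F xb `<=` active G xb) ->
           (forall i, active F xb i -> active G xb i ->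
              (limf_esup (fun x : V =>
                  (`|F i x - G i x - (F i xb - G i xb)| / enorm (x - xb))%:E)
                 xb^' <= eps%:E)%E) ->
           (tau_min G xb <= c%:E)%E.
Proof.
move=> mpos.
set mu := min_dir_deriv f xb in mpos *.
have hinf : has_inf [set dir_deriv f xb h | h in [set h : V | enorm h = 1]].
  apply/asboolP; apply: contraT => /asboolP H.
  by move: mpos; rewrite /mu /min_dir_deriv inf_out // ltxx.
have hmu : forall h, enorm h = 1 -> mu <= dir_deriv f xb h.
  by move=> h hh; apply: (ge_inf hinf.2); exists h.
have fgrow : forall h s, enorm h = 1 -> 0 < s -> mu * s <= f (xb + s *: h).
  move=> h s hh sp; have := le_trans (hmu h hh) (dd_le cvxf xb h sp).
  by rewrite /dq fxb subr0 ler_pdivlMr // mulrC.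
exists (4 / mu), (mu / 8); split; first by rewrite divr_gt0.
split; first by rewrite divr_gt0.
move=> G hGc hGcvx hG0 _ hpos hls.
have cG := joint_to_sep hGc.
have Gxb_le : forall j, G j xb <= 0.
  by move=> j; rewrite -hG0; exact: (fmax_ub cptI neI cG).
have key : forall h s, enorm h = 1 -> 0 < s -> mu / 4 * s <= fmax G (xb + s *: h).
  move=> h s hh sp.
  have h0 : h != 0 := enorm_unit_neq0 hh.
  have [i [ai hi]] : exists i, active F xb i /\ forall s, 0 < s -> mu / 2 * s <= F i (xb + s *: h).
    apply: contrapT => Hn.
    have step : forall i, exists2 s, 0 < s & F i (xb + s *: h) < mu / 2 * s.
      move=> i.
      have [ai|nai] := pselect (active F xb i).
        have [//|H] := pselect (exists2 s, 0 < s & F i (xb + s *: h) < mu / 2 * s).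
        exfalso; apply: Hn; exists i; split => // s0 s0p.
        by rewrite leNgt; apply/negP => hlt; apply: H; exists s0.
      have Fneg : F i xb < 0.
        rewrite lt_neqAle Fxb_le andbT; apply/negP => /eqP e; apply: nai.
        by rewrite /active /= e fxb.
      have [s0 /andP[sp0 s1] hs] := small_s (F i (xb + h)) (mu / 2) Fneg.
      exists s0 => //.
      have := conv_ray (cvxF i) xb h sp0 s1; rewrite divr1 scale1r.
      move=> H; exact: le_lt_trans H hs.
    have ray : forall j s t, 0 < s -> s <= t -> F j (xb + s *: h) <= s / t * F j (xb + t *: h).
      move=> j s0 t sp0 st; have tp : 0 < t by exact: lt_le_trans st.
      have := conv_ray (cvxF j) xb h sp0 st.
      have := Fxb_le j.
      have l1 : s0 / t <= 1 by rewrite ler_pdivrMr // mul1r.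
      have l0 : 0 <= s0 / t by rewrite divr_ge0 // ltW.
      nra.
    have [ss ss0 hss] := unif_step cptI (phi := fun j s => F j (xb + s *: h))
       (kappa := mu / 2) (fun s => @cF (xb + s *: h)) ray step.
    have := fgrow h ss hh ss0.
    have := fmax_le neI hss.
    have : 0 < mu * ss by rewrite mulr_gt0.
    lra.
  have aG := hpos mpos i ai.
  have Fi0 : F i xb = 0 by rewrite ai.
  have Gi0 : G i xb = 0 by rewrite aG.
  have Hn := limsup_near _ (hls i ai aG) (ltac:(lra) : mu / 8 < mu / 4).
  have Hr := ray_near h0 Hn.
  near (0 : R)^'+ => s1.
  have s1p : 0 < s1 by near: s1; exact: nbhs_right_gt.
  have s1s : s1 < s by near: s1; exact: nbhs_right_lt.
  have H1 : `|F i (xb + s1 *: h) - G i (xb + s1 *: h) - (F i xb - G i xb)| / enorm ((xb + s1 *: h) - xb) < mu / 4.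
    exact: (near Hr s1).
  move: H1; have -> : xb + s1 *: h - xb = s1 *: h by rewrite addrAC subrr add0r.
  rewrite Fi0 Gi0 subrr subr0 enormZ (gtr0_norm s1p) hh mulr1.
  rewrite ltr_pdivrMr // ltr_norml => /andP[hl1 hl2].
  have hF1 := hi s1 s1p.
  have G1 : mu / 4 * s1 <= G i (xb + s1 *: h) by lra.
  have := conv_ray (hGcvx i) xb h s1p (ltW s1s).
  have := Gxb_le i.
  have l0 : 0 < s1 / s by rewrite divr_gt0.
  have l1 : s1 / s <= 1 by rewrite ler_pdivrMr // mul1r ltW.
  move=> Gx0 Hc.
  have Hc2 : G i (xb + s1 *: h) <= s1 / s * G i (xb + s *: h) by nra.
  apply: le_trans (_ : G i (xb + s *: h) <= _); last exact: (fmax_ub cptI neI cG).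
  rewrite -(ler_pM2l l0).
  have -> : s1 / s * (mu / 4 * s) = mu / 4 * s1 by field; rewrite lt0r_neq0.
  lra.
apply: (tau_le (delta := 1)) => //; first by rewrite divr_gt0.
move=> x _.
have Sxb : solset G xb by move=> j; exact: Gxb_le.
apply: le_trans (edist_le x Sxb) _; rewrite lee_fin.
have [xe|xne] := eqVneq (x - xb) 0.
  by rewrite xe enorm0; apply: mulr_ge0; [rewrite divr_ge0 // ltW | rewrite le_max lexx orbT].
have [hh [xe ep]] := normalize xne.
have := key _ _ hh ep; rewrite -xe (_ : xb + (x - xb) = x); last by rewrite addrC subrK.
move=> Hk.
have : fmax G x <= Num.max (fmax G x) 0 by rewrite le_max lexx.
move=> Hm.
rewrite -(ler_pM2l (_ : 0 < mu / 4)); last by rewrite divr_gt0.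
have -> : mu / 4 * (4 / mu * Num.max (fmax G x) 0) = Num.max (fmax G x) 0.
  by field; rewrite lt0r_neq0.
lra.
Unshelve. all: by end_near.
Qed.

End Main.

Section Main2.
Variables (R : realType) (m : nat) (I : topologicalType).
Local Notation V := 'rV[R]_m.
Variables (F : I -> V -> R) (xb : V).
Hypothesis m0 : (0 < m)%N.
Hypothesis cptI : compact [set: I].
Hypothesis neI : [set: I] !=set0.
Hypothesis cvxF : forall i, convex_fun (F i).
Hypothesis cF : forall x, continuous (fun i => F i x).
Hypothesis fxb : fmax F xb = 0.

Local Notation f := (fmax F).

Lemma inner_cont (u : V) (eps : R) : 0 < eps ->
  continuous (fun p : I * V => eps * inner u (p.2 - xb)).
Proof.
move=> e0 [i0 x0]; apply/cvgrPdist_lt => e ep.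
set L := eps * enorm u * m%:R + 1.
have L0 : 0 < L by rewrite ltr_wpDl // mulr_ge0 // mulr_ge0 ?enorm_ge0 // ltW.
have hx : \forall x \near x0, `|x0 - x| < e / L.
  by move/cvgrPdist_lt : (@cvg_id _ (nbhs x0)); apply; rewrite divr_gt0.
exists ([set: I], [set x | `|x0 - x| < e / L]); first by split => //=; exact: filterT.
move=> [j x] /= [_ hxx].
have -> : eps * inner u (x0 - xb) - eps * inner u (x - xb) = eps * inner u (x0 - x).
  by rewrite !innerB; ring.
rewrite normrM gtr0_norm //.
set a := `|x0 - x|.
have h1 : `|inner u (x0 - x)| <= enorm u * enorm (x0 - x) := CS _ _.
have h2 : enorm (x0 - x) <= m%:R * a := enorm_le_mxnorm _.
have h4 : eps * `|inner u (x0 - x)| <= (eps * enorm u * m%:R) * a.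
  apply: le_trans (ler_wpM2l (ltW e0) (le_trans h1 (ler_wpM2l (enorm_ge0 u) h2))) _.
  by rewrite !mulrA.
have h5 : (eps * enorm u * m%:R) * a <= L * a by apply: ler_wpM2r; [exact: normr_ge0 | rewrite /L lerDl].
have h6 : L * a < e by rewrite mulrC -ltr_pdivlMr.
lra.
Qed.

Lemma ii_iii :
  (exists c eps : R, 0 < c /\ 0 < eps /\
         forall G : I -> V -> R,
           continuous (fun p : I * V => G p.1 p.2) ->
           (forall i, convex_fun (G i)) ->
           fmax G xb = 0 ->
           (min_dir_deriv f xb < 0 -> active G xb `<=` active F xb) ->
           (0 < min_dir_deriv f xb -> active F xb `<=` active G xb) ->
           (forall i, active F xb i -> active G xb i ->
              (limf_esup (fun x : V =>
                  (`|F i x - G i x - (F i xb - G i xb)| / enorm (x - xb))%:E)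
                 xb^' <= eps%:E)%E) ->
           (tau_min G xb <= c%:E)%E) ->
  exists c eps : R, 0 < c /\ 0 < eps /\
         forall u : V, enorm u <= 1 ->
           (tau_min (fun i x => (F i x + eps * inner u (x - xb))%R) xb <= c%:E)%E.
Proof.
move=> [c [eps [c0 [e0 H]]]]; exists c, eps; split => //; split => // u hu.
have GE : forall i, F i xb + eps * inner u (xb - xb) = F i xb.
  by move=> i; rewrite subrr inner0 mulr0 addr0.
have fG : fmax (fun i x => F i x + eps * inner u (x - xb)) xb = f xb.
  by rewrite /fmax; congr sup; apply: eq_imagel => i _; rewrite GE.
apply: H.
- have jc := joint_cont m0 cptI neI cvxF cF.
  have lc := inner_cont (u := u) e0.
  by move=> p; apply: (cvgD (jc p) (lc p)).
- move=> i x y t t01 /=.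
  have := cvxF i x y t01.
  have -> : inner u (t *: x + (1 - t) *: y - xb) = t * inner u (x - xb) + (1 - t) * inner u (y - xb).
    by rewrite !innerB !innerD !innerZ; ring.
  lra.
- by rewrite fG.
- by move=> _ i; rewrite /active /= GE fG.
- by move=> _ i; rewrite /active /= GE fG.
move=> i _ _.
rewrite limf_esupE; apply: ge_ereal_inf; exists (ereal_sup ((fun x : V =>
   (`|F i x - (F i x + eps * inner u (x - xb)) - (F i xb - (F i xb + eps * inner u (xb - xb)))| / enorm (x - xb))%:E) @` setT)).
  by exists setT => //; exact: filterT.
apply: ge_ereal_sup => _ [x _ <-]; rewrite lee_fin.
rewrite subrr inner0 mulr0 addr0 subrr subr0 opprD addrA subrr add0r normrN normrM gtr0_norm //.
have [ez|enz] := eqVneq (enorm (x - xb)) 0.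
  by rewrite ez invr0 mulr0 ltW.
have ep : 0 < enorm (x - xb) by rewrite lt_def enz enorm_ge0.
rewrite ler_pdivrMr //; apply: ler_wpM2l; first exact: ltW.
apply: le_trans (CS _ _) _.
by rewrite -[X in _ <= X]mul1r; apply: ler_wpM2r => //; exact: enorm_ge0.
Qed.

End Main2.

Section Main3.
Variables (R : realType) (m : nat) (I : topologicalType).
Local Notation V := 'rV[R]_m.
Variables (F : I -> V -> R) (xb : V).
Hypothesis m0 : (0 < m)%N.
Hypothesis cptI : compact [set: I].
Hypothesis neI : [set: I] !=set0.
Hypothesis cvxF : forall i, convex_fun (F i).
Hypothesis cF : forall x, continuous (fun i => F i x).
Hypothesis fxb : fmax F xb = 0.

Local Notation f := (fmax F).

Lemma f_sphere_bound : exists B, forall h : V, enorm h = 1 -> f (xb - h) <= B.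
Proof.
have cf := cvxf cptI neI cvxF cF.
set r : R := m%:R.
have r0 : 0 < r by rewrite ltr0n.
set B := `|f xb| + \sum_(k < m) (`|f (xb + r *: ee k)| + `|f (xb - r *: ee k)|).
have sk : forall k, `|f (xb + r *: ee k)| + `|f (xb - r *: ee k)| <=
    \sum_(k < m) (`|f (xb + r *: ee k)| + `|f (xb - r *: ee k)|).
  move=> k; rewrite (bigD1 k) //= lerDl; apply: sumr_ge0 => i _; exact: addr_ge0.
exists B => h hh; rewrite -[xb - h]/(xb + - h).
apply: (l1_ball_bound cf r0).
- by apply: le_trans (ler_norm _) _; rewrite /B lerDl sumr_ge0 // => k _; rewrite addr_ge0.
- move=> k; apply: le_trans (ler_norm _) _; have := sk k; have := normr_ge0 (f xb).
  have := normr_ge0 (f (xb - r *: ee k)); rewrite /B; lra.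
- move=> k; apply: le_trans (ler_norm _) _; have := sk k; have := normr_ge0 (f xb).
  have := normr_ge0 (f (xb + r *: ee k)); rewrite /B; lra.
- apply: le_trans (_ : \sum_(k < m) (1 : R) <= _); last by rewrite sumr_const card_ord.
  apply: ler_sum => k _; rewrite mxE normrN -hh; exact: coord_le_enorm.
Qed.

Lemma iii_i :
  (exists c eps : R, 0 < c /\ 0 < eps /\
         forall u : V, enorm u <= 1 ->
           (tau_min (fun i x => (F i x + eps * inner u (x - xb))%R) xb <= c%:E)%E) ->
  min_dir_deriv f xb <> 0.
Proof.
move=> [c [eps [c0 [e0 H]]]] hmu0.
have cf := cvxf cptI neI cvxF cF.
have Dne := Dset_ne F xb m0.
have [B HB] := f_sphere_bound.
have hinf : has_inf [set dir_deriv f xb h | h in [set h : V | enorm h = 1]].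
  split => //; exists (- B) => _ [h hh <-].
  apply: le_trans (dd_ge cf xb h); rewrite fxb sub0r lerN2; exact: HB.
have dge : forall h, enorm h = 1 -> 0 <= dir_deriv f xb h.
  move=> h hh; rewrite -hmu0; apply: (ge_inf hinf.2); by exists h.
have fge : forall y, 0 <= f y.
  move=> y; have [ye|yne] := eqVneq (y - xb) 0.
    by move/eqP: ye; rewrite subr_eq0 => /eqP ->; rewrite fxb.
  have [hh [ye ep]] := normalize yne.
  have := le_trans (dge _ hh) (dd_le cf xb _ ep).
  rewrite /dq -ye fxb subr0 (_ : xb + (y - xb) = y); last by rewrite addrC subrK.
  by move=> Hd; rewrite -(divfK (lt0r_neq0 ep) (f y)) mulr_ge0 // ltW.
set eta := (4 * c)^-1.
have eta0 : 0 < eta by rewrite invr_gt0 mulr_gt0.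
set t := Num.min 1 (eta / eps).
have t0 : 0 < t by rewrite lt_min ltr01 divr_gt0.
have t1 : t <= 1 by rewrite ge_min lexx.
have et : eps * t <= eta.
  rewrite -ler_pdivlMl // mulrC; by rewrite ge_min lexx orbT.
have [_ [h hh <-] hlt] := inf_lt Dne (ltac:(rewrite -/(min_dir_deriv f xb) hmu0; exact: eta0)
   : inf [set dir_deriv f xb h | h in [set h : V | enorm h = 1]] < eta).
have [s0 s00 hs0] := dd_lt cf hlt.
have fsmall : forall s, 0 < s -> s <= s0 -> f (xb + s *: h) < eta * s.
  move=> s sp ss0; have := le_lt_trans (dq_mono cf xb h sp ss0) hs0.
  by rewrite /dq fxb subr0 ltr_pdivrMr // mulrC.
set u := t *: h.
have hu : enorm u <= 1 by rewrite /u enormZ gtr0_norm // hh mulr1.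
have := H u hu.
set G := fun i x => F i x + eps * inner u (x - xb).
have lb : ((2 * c)%:E <= tau_min G xb)%E.
  apply: le_ereal_inf_tmp => _ [tau [tau0 [d [d0 Hd]]] <-]; rewrite lee_fin.
  set s := Num.min d s0.
  have sp : 0 < s by rewrite lt_min d0 s00.
  have sd : s <= d by rewrite ge_min lexx.
  have ss0 : s <= s0 by rewrite ge_min lexx orbT.
  set x := xb + s *: h.
  have exs : enorm (x - xb) = s by rewrite /x addrAC subrr add0r enormZ gtr0_norm // hh mulr1.
  have := Hd x (ltac:(by rewrite exs)).
  have low : (s%:E <= Defs.edist x (solset G))%E.
    apply: le_ereal_inf_tmp => _ [y Sy <-]; rewrite lee_fin.
    have hy : f y <= - (eps * t * inner h (y - xb)).
      apply: fmax_le => // i; have := Sy i; rewrite /G /u innerC innerZ innerC; lra.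
    have hpos : inner h (y - xb) <= 0.
      have := fge y; have : 0 < eps * t by rewrite mulr_gt0.
      move=> et0 fy; rewrite leNgt; apply/negP => ip.
      have : 0 < eps * t * inner h (y - xb) by rewrite mulr_gt0.
      lra.
    have -> : x - y = s *: h - (y - xb) by rewrite /x; apply/rowP => k; rewrite !mxE; ring.
    have := CS h (s *: h - (y - xb)); rewrite hh mul1r innerB innerZ inner_self hh expr1n mulr1.
    rewrite ler_norml => /andP[_ H2]; lra.
  have up : Num.max (fmax G x) 0 <= 2 * eta * s.
    have fx := fsmall s sp ss0.
    have Gle : fmax G x <= f x + eps * t * s.
      apply: fmax_le => // i; rewrite /G /u /x.
      have -> : xb + s *: h - xb = s *: h by rewrite addrAC subrr add0r.
      rewrite innerZ innerC innerZ inner_self hh expr1n mulr1.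
      have := fmax_ub cptI neI cF i (xb + s *: h); lra.
    rewrite ge_max; apply/andP; split.
      apply: le_trans Gle _; have := ler_wpM2r (ltW sp) et; lra.
    by rewrite mulr_ge0 // ?mulr_ge0 // ltW.
  move=> Hx; have := le_trans low Hx; rewrite lee_fin => Hs.
  have : s <= tau * (2 * eta * s) by apply: le_trans Hs _; rewrite ler_wpM2l // ltW.
  have -> : tau * (2 * eta * s) = (tau / (2 * c)) * s.
    by rewrite /eta; field; rewrite lt0r_neq0.
  rewrite -{1}[s]mul1r ler_pM2r // ler_pdivlMr ?mul1r // mulr_gt0 //.
move=> hc; have := le_trans lb hc; rewrite lee_fin; lra.
Qed.

End Main3.

Unset Implicit Arguments.

Theorem theorem12 (R : realType) (m : nat) (I : topologicalType)
  (F : I -> 'rV[R]_m -> R) (xb : 'rV[R]_m) :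
  (0 < m)%N ->
  compact [set: I] -> hausdorff_space I -> [set: I] !=set0 ->
  (forall i, convex_fun (F i)) ->
  (forall x, continuous (fun i => F i x)) ->
  fmax F xb = 0 ->
  [<-> (* (i) *)
       min_dir_deriv (fmax F) xb <> 0;
       (* (ii) *)
       exists c eps : R, 0 < c /\ 0 < eps /\
         forall G : I -> 'rV[R]_m -> R,
           continuous (fun p : I * 'rV[R]_m => G p.1 p.2) ->
           (forall i, convex_fun (G i)) ->
           fmax G xb = 0 ->
           (min_dir_deriv (fmax F) xb < 0 -> active G xb `<=` active F xb) ->
           (0 < min_dir_deriv (fmax F) xb -> active F xb `<=` active G xb) ->
           (forall i, active F xb i -> active G xb i ->
              (limf_esup (fun x : 'rV[R]_m =>
                  (`|F i x - G i x - (F i xb - G i xb)| / enorm (x - xb))%:E)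
                 xb^' <= eps%:E)%E) ->
           (tau_min G xb <= c%:E)%E;
       (* (iii) *)
       exists c eps : R, 0 < c /\ 0 < eps /\
         forall u : 'rV[R]_m, enorm u <= 1 ->
           (tau_min (fun i x => (F i x + eps * inner u (x - xb))%R) xb <= c%:E)%E].
Proof.
move=> m0 cptI _ neI cvxF cF fxb.
split; [|split].
- move=> hne; have /orP[hlt|hgt] : (min_dir_deriv (fmax F) xb < 0) || (0 < min_dir_deriv (fmax F) xb).
    by apply: lt_total; apply/eqP.
  + exact: (neg_case m0 cptI neI cvxF cF fxb hlt).
  + exact: (pos_case cptI neI cvxF cF fxb hgt).
- exact: (ii_iii m0 cptI neI cvxF cF fxb).
- exact: (iii_i m0 cptI neI cvxF cF fxb).
Qed.
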